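(* Let $n$ be even, let $\varphi\in(0,1)$, and consider the problem BPAOAZ (defined in the context). The expected running time of $\text{EMPMO}_{\text{random}}$, in which party 1 is chosen with probability $\varphi$ and party 2 with probability $1-\varphi$ in each iteration, applied to BPAOAZ is bounded by $O\left(\left(\frac{1}{\varphi}+\frac{1}{1-\varphi}\right)\frac{n^2}{2}\log n\right)$.
   Context: BPAOAZ: for $\mathbf{x}=(x_1,\dots,x_n)\in\{0,1\}^n$ with $n$ even, party 1 has objectives $f_{11}(\mathbf{x})=\sum_{i=n/2+1}^{n}x_i$ and $f_{12}(\mathbf{x})=\sum_{i=1}^{n/2}x_i+\sum_{i=n/2+1}^{n}(1-x_i)$; party 2 has objectives $f_{21}(\mathbf{x})=\sum_{i=1}^{n/2}(1-x_i)+\sum_{i=n/2+1}^{n}x_i$ and $f_{22}(\mathbf{x})=\sum_{i=1}^{n/2}x_i$; all objectives are maximized. $F_m=(f_{m1},f_{m2})$. For party $m$: $\mathbf{z}\succeq_m\mathbf{x}$ if $f_{mk}(\mathbf{z})\ge f_{mk}(\mathbf{x})$ for $k=1,2$; $\mathbf{z}\succ_m\mathbf{x}$ if moreover strict for some $k$. The common Pareto set (solutions Pareto optimal for both parties) is $\{1^n\}$. One-bit mutation flips one uniformly random bit. $\text{EMPMO}_{\text{random}}$: choose $\mathbf{x}$ uniformly from $\{0,1\}^n$, $P=\{\mathbf{x}\}$. Each iteration: pick $\mathbf{x}\in P$ uniformly at random; pick party $m$ ($m=1$ with probability $\varphi$, $m=2$ with probability $1-\varphi$); apply one-bit mutation to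 $\mathbf{x}$ to get $\mathbf{x}'$; if no $\mathbf{z}\in P$ satisfies $\mathbf{z}\succ_m\mathbf{x}'$ or $F_m(\mathbf{z})=F_m(\mathbf{x}')$, set $P\leftarrow(P\setminus\{\mathbf{z}\in P:\mathbf{x}'\succ_m\mathbf{z}\})\cup\{\mathbf{x}'\}$; then set $P\leftarrow\{\mathbf{z}\in P:\nexists\,\mathbf{z}'\in P\setminus\{\mathbf{z}\}\text{ with }\mathbf{z}'\succeq_m\mathbf{z}\}$. The running time is the number of fitness evaluations (mutations) until the common Pareto-optimal solution is included in the population for the first time. *)

(* Defs.v *)
From mathcomp Require Import all_boot all_order all_algebra.
From mathcomp Require Import all_classical all_reals all_analysis.

Set Implicit Arguments.
Unset Strict Implicit.
Unset Printing Implicit Defensive.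

Import Order.TTheory GRing.Theory Num.Theory.
Local Open Scope ring_scope.

Inductive party := Party1 | Party2.

Section BPAOAZ.
Variable n : nat.

(* bit strings x = (x_1,...,x_n); index i : 'I_n stands for x_{i+1},
   so the first half {x_1..x_{n/2}} is {i | i < n/2}. *)
Definition bits := {ffun 'I_n -> bool}.
Definition pop := {set bits}.

Definition f11 (x : bits) : nat := (\sum_(i < n | n./2 <= i) nat_of_bool (x i))%N.
Definition f12 (x : bits) : nat :=
  (\sum_(i < n | i < n./2) nat_of_bool (x i) + \sum_(i < n | n./2 <= i) nat_of_bool (~~ x i))%N.
Definition f21 (x : bits) : nat :=
  (\sum_(i < n | i < n./2) nat_of_bool (~~ x i) + \sum_(i < n | n./2 <= i) nat_of_bool (x i))%N.
Definition f22 (x : bits) : nat := (\sum_(i < n | i < n./2) nat_of_bool (x i))%N.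

Definition fobj (m : party) (k : bool) (x : bits) : nat :=
  match m, k with
  | Party1, true => f11 x | Party1, false => f12 x
  | Party2, true => f21 x | Party2, false => f22 x end.

Definition Feq m (z x : bits) : bool :=
  (fobj m true z == fobj m true x) && (fobj m false z == fobj m false x).

Definition wdom m (z x : bits) : bool :=
  (fobj m true x <= fobj m true z)%N && (fobj m false x <= fobj m false z)%N.

Definition sdom m (z x : bits) : bool :=
  wdom m z x && ((fobj m true x < fobj m true z)%N || (fobj m false x < fobj m false z)%N).

Definition flip (x : bits) (i : 'I_n) : bits := [ffun j => if j == i then ~~ x j else x j].

Definition update (m : party) (P : pop) (x' : bits) : pop :=
  let P1 := if [exists z in P, sdom m z x' || Feq m z x'] then P
            else (P :\: [set z in P | sdom m x' z]) :|: [set x'] in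
  [set z in P1 | ~~ [exists z' in P1, (z' != z) && wdom m z' z]].

Definition ones : bits := [ffun _ => true].
Definition hit (P : pop) : bool := ones \in P.

Variable R : realType.
Variable phi : R.

(* one-iteration transition probability P -> Q:
   x uniform in P, party 1 w.p. phi / party 2 w.p. 1-phi, bit i uniform. *)
Definition kernel (P Q : pop) : R :=
  \sum_(x in P) \sum_(i < n)
     ((#|P|%:R)^-1 * (n%:R)^-1) *
     (phi * (update Party1 P (flip x i) == Q)%:R
      + (1 - phi) * (update Party2 P (flip x i) == Q)%:R).

(* mu t Q = Pr[ the population after t mutations is Q and 1^n has not been
   in the population at any time 0..t ]  (initial population {x}, x uniform) *)
Fixpoint mu (t : nat) : {ffun pop -> R} :=
  match t with
  | 0 => [ffun Q : pop => if hit Q then 0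
                         else \sum_(x : bits) ((2 ^ n)%:R)^-1 * (Q == [set x])%:R]
  | t'.+1 => [ffun Q : pop => if hit Q then 0
                              else \sum_(P : pop) mu t' P * kernel P Q]
  end.

(* Pr[T > t], T = number of mutations until 1^n first enters the population *)
Definition tail_prob (t : nat) : R := \sum_(Q : pop) mu t Q.

(* expected running time E[T] = sum_{t >= 0} Pr[T > t]  (in \bar R, may be +oo) *)
Definition expected_runtime : \bar R := (\sum_(t <oo) (tail_prob t)%:E)%E.

End BPAOAZ.

(* Main.v *)
Require Import Defs.
From mathcomp Require Import all_boot all_order all_algebra.
From mathcomp Require Import all_classical all_reals all_analysis.
From mathcomp Require Import ring lra zify.
Import Order.TTheory GRing.Theory Num.Theory.

Section Comb.
Variable n : nat.
Implicit Types (x y z w : bits n) (P Q : pop n).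

Definition Sx x : nat := (\sum_(i < n) nat_of_bool (x i))%N.
Definition Zc x : nat := (\sum_(i < n) nat_of_bool (~~ x i))%N.
Definition c1 : nat := (\sum_(i < n | i < n./2) 1)%N.
Definition c2 : nat := (\sum_(i < n | n./2 <= i) 1)%N.

Lemma S_AB x : Sx x = (f22 x + f11 x)%N.
Proof.
rewrite /Sx /f22 /f11 (bigID (fun i : 'I_n => i < n./2)) /=.
by congr (_ + _)%N; apply: eq_bigl => i /=; rewrite ltnNge negbK.
Qed.

Lemma SZ x : (Sx x + Zc x = n)%N.
Proof.
rewrite /Sx /Zc -big_split /= -[in RHS](card_ord n) -sum1_card.
by apply: eq_bigr => i _; case: (x i).
Qed.

Lemma f12E x : (f12 x + f11 x = f22 x + c2)%N.
Proof.
rewrite /f12 /f11 /f22 /c2 -addnA -big_split /=; congr (_ + _)%N.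
by apply: eq_bigr => i _; case: (x i).
Qed.

Lemma f21E x : (f21 x + f22 x = c1 + f11 x)%N.
Proof.
rewrite /f21 /f22 /f11 /c1 addnAC -big_split /=; congr (_ + _)%N.
by apply: eq_bigr => i _; case: (x i).
Qed.

Lemma wdom_AB m z x : wdom m z x -> (f22 x <= f22 z)%N /\ (f11 x <= f11 z)%N.
Proof.
case: m; rewrite /wdom /= => /andP [h1 h2].
- have := f12E x; have := f12E z; lia.
- have := f21E x; have := f21E z; lia.
Qed.

Lemma key_Feq m z x : f22 z = f22 x -> f11 z = f11 x -> Feq m z x.
Proof.
move=> e1 e2; case: m; rewrite /Feq /=; apply/andP; split; apply/eqP => //.
- have := f12E x; have := f12E z; lia.
- have := f21E x; have := f21E z; lia.
Qed.

Lemma Feq_wdom m z x : Feq m z x -> wdom m z x.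
Proof. by rewrite /Feq /wdom => /andP[/eqP -> /eqP ->]; rewrite !leqnn. Qed.

Lemma sdom_wdom m z x : sdom m z x -> wdom m z x.
Proof. by case/andP. Qed.

Definition InvP P := forall z1 z2, z1 \in P -> z2 \in P ->
  f22 z1 = f22 z2 -> f11 z1 = f11 z2 -> z1 = z2.

Definition P1 m P x' : pop n :=
  if [exists z in P, sdom m z x' || Feq m z x'] then P
  else (P :\: [set z in P | sdom m x' z]) :|: [set x'].
Definition filt m Q : pop n :=
  [set z in Q | ~~ [exists z' in Q, (z' != z) && wdom m z' z]].
Lemma updateE m P x' : update m P x' = filt m (P1 m P x').
Proof. by []. Qed.

Lemma wdom_S m Q z x : InvP Q -> z \in Q -> x \in Q -> z != x -> wdom m z x ->
  (Sx x < Sx z)%N.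
Proof.
move=> I zQ xQ nzx /wdom_AB [h1 h2]; rewrite !S_AB.
have : ~ (f22 z = f22 x /\ f11 z = f11 x).
  by move=> [e1 e2]; move/eqP: nzx; apply; exact: I.
lia.
Qed.

Lemma filt_sub m Q : filt m Q \subset Q.
Proof. by apply/fintype.subsetP => z; rewrite inE => /andP[]. Qed.

Lemma Inv_sub Q Q' : Q' \subset Q -> InvP Q -> InvP Q'.
Proof. move=> /fintype.subsetP sQ I z1 z2 h1 h2; apply: I; exact: sQ. Qed.

Lemma filt_max m Q w : InvP Q -> w \in Q -> (forall z, z \in Q -> (Sx z <= Sx w)%N) ->
  w \in filt m Q.
Proof.
move=> I wQ hmax; rewrite inE wQ /=; apply/negP => /existsP [z' /andP [z'Q /andP [ne wd]]].
have := wdom_S _ _ _ _ I z'Q wQ ne wd; have := hmax z' z'Q; lia.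
Qed.

Lemma max_exists Q : (exists z, z \in Q) ->
  exists2 w, w \in Q & forall z, z \in Q -> (Sx z <= Sx w)%N.
Proof.
move=> [z0 z0Q]; case: (@arg_maxnP _ z0 (mem Q) Sx z0Q) => w wQ hw.
by exists w.
Qed.

Lemma filt_nonempty m Q : InvP Q -> (exists z, z \in Q) ->
  exists2 w, w \in filt m Q & forall z, z \in Q -> (Sx z <= Sx w)%N.
Proof.
move=> I /max_exists [w wQ hw]; exists w => //; exact: filt_max.
Qed.

Lemma S_le x : (Sx x <= n)%N.
Proof. have := SZ x; lia. Qed.

Definition km m z : nat := if m is Party1 then f11 z else f22 z.

Lemma km_le m z : (km m z <= n)%N.
Proof. case: m => /=; have := S_le z; rewrite S_AB; lia. Qed.

Lemma km_cmp m z1 z2 : km m z1 = km m z2 -> wdom m z1 z2 || wdom m z2 z1.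
Proof.
case: m => /= e; rewrite /wdom /= e leqnn /= ?andbT.
- exact: leq_total.
- exact: leq_total.
Qed.

Definition kmo m z : 'I_n.+1 := inord (km m z).

Lemma filt_card m Q : (#|filt m Q| <= n.+1)%N.
Proof.
have inj : {in filt m Q &, injective (kmo m)}.
  move=> z1 z2 h1 h2; rewrite /kmo => /(congr1 val); rewrite /= !inordK ?ltnS ?km_le // => e.
  case: (eqVneq z1 z2) => // ne; exfalso.
  have q1 : z1 \in Q by move/fintype.subsetP: (filt_sub m Q); apply.
  have q2 : z2 \in Q by move/fintype.subsetP: (filt_sub m Q); apply.
  case/orP: (km_cmp _ _ _ e) => wd.
  - move: h2; rewrite inE => /andP [_ /negP]; apply; apply/existsP; exists z1.
    by rewrite q1 ne wd.
  - move: h1; rewrite inE => /andP [_ /negP]; apply; apply/existsP; exists z2.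
    by rewrite q2 eq_sym ne wd.
rewrite -(card_in_imset inj); apply: leq_trans (max_card _) _; by rewrite card_ord.
Qed.

Lemma P1_Inv m P x' : InvP P -> InvP (P1 m P x').
Proof.
rewrite /P1; case: ifPn => // hrej I.
have sub : forall z, z \in (P :\: [set z in P | sdom m x' z]) :|: [set x'] ->
    z \in P \/ z = x'.
  by move=> z; rewrite !inE => /orP [/andP [_ ->]|/eqP ->]; [left|right].
have bad : forall z, z \in P -> f22 z = f22 x' -> f11 z = f11 x' -> False.
  move=> z zP e1 e2; move/negP: hrej; apply; apply/existsP; exists z.
  by rewrite zP (key_Feq m _ _ e1 e2) orbT.
move=> z1 z2 /sub [h1|->] /sub [h2|->] e1 e2 //.
- exact: I.
- by case: (bad _ h1 e1 e2).
- by case: (bad _ h2 (esym e1) (esym e2)).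
Qed.

Lemma P1_mem m P x' y : y \in P -> exists2 w, w \in P1 m P x' & (Sx y <= Sx w)%N.
Proof.
rewrite /P1; case: ifPn => hrej yP; first by exists y.
case: (boolP (sdom m x' y)) => hd.
- exists x'; first by rewrite !inE eqxx orbT.
  have [h1 h2] := wdom_AB _ _ _ (sdom_wdom _ _ _ hd); rewrite !S_AB; lia.
- by exists y => //; rewrite !inE yP hd.
Qed.

Lemma P1_new m P x' : (forall z, z \in P -> (Sx z < Sx x')%N) -> x' \in P1 m P x'.
Proof.
move=> hlt; rewrite /P1; case: ifPn => [/existsP [z /andP [zP h]]|_]; last first.
  by rewrite !inE eqxx orbT.
have := hlt z zP.
have : wdom m z x' by case/orP: h => [/sdom_wdom|/Feq_wdom].
move/wdom_AB; rewrite !S_AB; lia.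
Qed.

Definition smax P : nat := (\max_(z in P) Sx z)%N.

Lemma smax_ge P z : z \in P -> (Sx z <= smax P)%N.
Proof. move=> zP; exact: (@leq_bigmax_cond _ (mem P) Sx z zP). Qed.

Lemma smax_ex P : (exists z, z \in P) -> exists2 z, z \in P & Sx z = smax P.
Proof.
move=> /card_gt0P h; case: (@eq_bigmax_cond _ (mem P) Sx h) => z zP e.
by exists z.
Qed.

Lemma S_flip x i : x i = false -> Sx (flip x i) = (Sx x).+1.
Proof.
move=> hx; rewrite /Sx (bigD1 i) //= [X in _ = X.+1](bigD1 i) //= !ffunE eqxx hx.
rewrite add0n add1n; congr _.+1; apply: eq_bigr => j /negbTE hj; by rewrite ffunE hj.
Qed.

Lemma S_ones x : Sx x = n -> x = ones n.
Proof.
move=> hS; have : Zc x = 0%N by have := SZ x; lia.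
move/eqP; rewrite /Zc sum_nat_eq0 => /forallP h; apply/ffunP => i; rewrite ffunE.
by move: (h i); case: (x i).
Qed.

Lemma smax_hit P : (exists z, z \in P) -> ~~ hit P -> (smax P < n)%N.
Proof.
move=> /smax_ex [z zP <-] nh; have := S_le z; rewrite leq_eqVlt => /orP [/eqP e|//].
by move: nh; rewrite /hit -(S_ones _ e) zP.
Qed.

Lemma upd_props m P x i : InvP P -> x \in P ->
  let Q := update m P (flip x i) in
  [/\ InvP Q, exists z, z \in Q, (#|Q| <= n.+1)%N, (smax P <= smax Q)%N &
      (Sx x = smax P -> x i = false -> (smax P < smax Q)%N)].
Proof.
move=> I xP Q; rewrite /Q updateE.
have I1 := P1_Inv m P (flip x i) I.
have [y yP hy] := smax_ex P (ex_intro _ x xP).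
have [w1 w1P hw1] := P1_mem m P (flip x i) y yP.
have [w wF hw] := filt_nonempty m _ I1 (ex_intro _ w1 w1P).
split.
- exact: (Inv_sub _ _ (filt_sub m _) I1).
- by exists w.
- exact: filt_card.
- rewrite -hy; apply: leq_trans hw1 _; apply: leq_trans (hw _ w1P) _; exact: smax_ge.
- move=> hx hxi.
  have hnew : flip x i \in P1 m P (flip x i).
    by apply: P1_new => z zP; rewrite S_flip // hx ltnS smax_ge.
  have := hw _ hnew; have := smax_ge _ _ wF; rewrite S_flip // hx; lia.
Qed.

End Comb.

Local Open Scope ring_scope.

Section Prob.
Variable n : nat.
Variable R : realType.
Variable phi : R.
Hypothesis phi0 : 0 <= phi.
Hypothesis phi1 : phi <= 1.
Hypothesis n0 : (0 < n)%N.

Definition Supp (P : pop n) :=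
  [/\ InvP n P, exists z, z \in P, (#|P| <= n.+1)%N & ~~ hit P].

Lemma sum_neq0 (I : finType) (p : pred I) (F : I -> R) :
  \sum_(i | p i) F i != 0 -> exists2 i, p i & F i != 0.
Proof.
move=> h; case: (pickP (fun i => p i && (F i != 0))) => [i /andP[pi fi]|none].
  by exists i.
move: h; rewrite big1 ?eqxx // => i pi; move: (none i); rewrite pi /=.
by move/negbFE/eqP.
Qed.

Lemma kernel_ge0 (P Q : pop n) : 0 <= Defs.kernel phi P Q.
Proof.
rewrite /Defs.kernel; apply: sumr_ge0 => x _; apply: sumr_ge0 => i _.
apply: mulr_ge0; first by apply: mulr_ge0; rewrite invr_ge0 ler0n.
apply: addr_ge0; apply: mulr_ge0; rewrite ?ler0n ?subr_ge0 //.
Qed.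

Lemma mu_ge0 t (Q : pop n) : 0 <= mu n phi t Q.
Proof.
elim: t Q => [|t IH] Q /=; rewrite ffunE; case: ifP => _ //.
  apply: sumr_ge0 => x _; apply: mulr_ge0; rewrite ?ler0n // invr_ge0 ler0n //.
apply: sumr_ge0 => P _; apply: mulr_ge0; [exact: IH|exact: kernel_ge0].
Qed.

Lemma mu_supp t (Q : pop n) : mu n phi t Q != 0 -> Supp Q.
Proof.
elim: t Q => [|t IH] Q /=; rewrite ffunE; case: ifPn => nh; rewrite ?eqxx // => h.
- have [x _ hx] := sum_neq0 _ _ _ h.
  have eQ : Q = [set x].
    by apply/eqP; move: hx; case: (Q == [set x]) => //; rewrite mulr0 eqxx.
  subst Q; split => //.
  + by move=> z1 z2; rewrite !inE => /eqP -> /eqP ->.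
  + by exists x; rewrite inE.
  + by rewrite cards1.
- have [P _ hP] := sum_neq0 _ _ _ h.
  move: hP; rewrite mulf_eq0 negb_or => /andP [hmu hk].
  have [I [z0 z0P] _ _] := IH P hmu.
  have [x xP hx] := sum_neq0 _ _ _ hk.
  have [i _ hi] := sum_neq0 _ _ _ hx.
  have key : exists m, update m P (flip x i) = Q.
    move: hi; case: (boolP (update Party1 P (flip x i) == Q)) => [/eqP e|_].
      by exists Party1.
    case: (boolP (update Party2 P (flip x i) == Q)) => [/eqP e|_].
      by exists Party2.
    by rewrite !mulr0 addr0 mulr0 eqxx.
  have [m em] := key; subst Q.
  have [I' ne' c' _ _] := upd_props n m P x i I xP.
  by split.
Qed.

Definition Hs (d : nat) : R := \sum_(i < d) ((i.+1)%:R)^-1.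
Definition Kc : R := (n * n.+1)%:R.
Definition gpot (P : pop n) : R := Kc * Hs (n - smax n P).

Lemma H_S d : Hs d.+1 = Hs d + ((d.+1)%:R)^-1.
Proof. by rewrite /Hs big_ord_recr. Qed.

Lemma H_ge0 d : 0 <= Hs d.
Proof. by apply: sumr_ge0 => i _; rewrite invr_ge0 ler0n. Qed.

Lemma H_mono d1 d2 : (d1 <= d2)%N -> Hs d1 <= Hs d2.
Proof.
move=> /subnK <-; elim: (d2 - d1)%N => [|k IH]; first by rewrite add0n.
rewrite addSn H_S; apply: le_trans IH _; rewrite lerDl invr_ge0 ler0n //.
Qed.

Lemma K_ge0 : 0 <= Kc.
Proof. by rewrite ler0n. Qed.

Lemma g_ge0 P : 0 <= gpot P.
Proof. apply: mulr_ge0; [exact: K_ge0|exact: H_ge0]. Qed.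

Lemma g_le P : gpot P <= Kc * Hs n.
Proof. apply: ler_wpM2l; [exact: K_ge0| apply: H_mono; exact: leq_subr]. Qed.

Lemma sum_pt (U : pop n) (G : pop n -> R) : \sum_Q (U == Q)%:R * G Q = G U.
Proof.
rewrite (bigD1 U) //= eqxx mul1r big1 ?addr0 // => Q /negbTE.
by rewrite eq_sym => ->; rewrite mul0r.
Qed.

Lemma kernel_sum (P : pop n) (G : pop n -> R) :
  \sum_Q Defs.kernel phi P Q * G Q =
  \sum_(x in P) \sum_(i < n) ((#|P|%:R)^-1 * (n%:R)^-1) *
     (phi * G (update Party1 P (flip x i)) + (1 - phi) * G (update Party2 P (flip x i))).
Proof.
rewrite /Defs.kernel.
under eq_bigr do rewrite big_distrl /=.
under eq_bigr do under eq_bigr do rewrite big_distrl /=.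
rewrite exchange_big /=; apply: eq_bigr => x xP.
rewrite exchange_big /=; apply: eq_bigr => i _.
set c := _ * _.
set U1 := update Party1 P (flip x i).
set U2 := update Party2 P (flip x i).
transitivity (\sum_Q (c * phi * ((U1 == Q)%:R * G Q) + c * (1 - phi) * ((U2 == Q)%:R * G Q))).
  by apply: eq_bigr => Q _; ring.
by rewrite big_split /= -!big_distrr /= !sum_pt; ring.
Qed.


Lemma sum_const_ord (k : nat) (a : R) : \sum_(i < k) a = a * k%:R.
Proof.
elim: k => [|k IH]; first by rewrite big_ord0 mulr0.
by rewrite big_ord_recr IH /= -addn1 natrD mulrDr mulr1.
Qed.

Lemma drift (P : pop n) : Supp P ->
  \sum_Q Defs.kernel phi P Q * gpot Q <= gpot P - 1.
Proof.
case=> I [z0 z0P] hcard nh.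
have [xs xsP hxs] := smax_ex n P (ex_intro _ z0 z0P).
have hs := smax_hit n P (ex_intro _ z0 z0P) nh.
rewrite kernel_sum.
set s := smax n P in hxs hs *.
have [d' hd] : exists d', (n - s)%N = d'.+1.
  by exists (n - s).-1; rewrite prednK // subn_gt0.
set c := ((#|P|%:R)^-1 * (n%:R)^-1).
have c0 : 0 <= c by apply: mulr_ge0; rewrite invr_ge0 ler0n.
pose b (x : bits n) (i : 'I_n) : R := ((x == xs) && ~~ x i)%:R.
set X := Kc * Hs d'.+1.
set Y := Kc * ((d'.+1)%:R)^-1.
have hg : forall m x i, x \in P ->
    gpot (update m P (flip x i)) <= X - b x i * Y.
  move=> m x i xP; have [_ _ _ hle hlt] := upd_props n m P x i I xP.
  rewrite /b; case: (boolP ((x == xs) && ~~ x i)) => [/andP [/eqP ex hxi]|_].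
  - subst x; have hlt' := hlt hxs (negbTE hxi).
    rewrite mul1r /X /Y H_S mulrDr addrK /gpot.
    apply: ler_wpM2l; first exact: K_ge0.
    apply: H_mono; lia.
  - rewrite mul0r subr0 /X -hd /gpot.
    apply: ler_wpM2l; first exact: K_ge0.
    apply: H_mono; lia.
apply: le_trans (_ : \sum_(x in P) \sum_(i < n) c * (X - b x i * Y) <= _).
  apply: ler_sum => x xP; apply: ler_sum => i _; apply: ler_wpM2l => //.
  have h1 := hg Party1 x i xP; have h2 := hg Party2 x i xP.
  have q0 := phi0; have q1 := phi1.
  nra.
have eb : \sum_(x in P) \sum_(i < n) b x i = (d'.+1)%:R.
  rewrite (bigD1 xs) //= [X in _ + X]big1 ?addr0; last first.
    move=> x /andP [_ /negbTE hx]; apply: big1 => i _; by rewrite /b hx.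
  rewrite -hd; transitivity ((Zc n xs)%:R : R).
    rewrite /Zc natr_sum; apply: eq_bigr => i _; by rewrite /b eqxx.
  by congr (_%:R); have := SZ n xs; rewrite hxs; lia.
have e : \sum_(x in P) \sum_(i < n) c * (X - b x i * Y) =
         c * X * (#|P| * n)%:R - c * Y * (d'.+1)%:R.
  transitivity (\sum_(x in P) (c * X * n%:R - c * Y * \sum_(i < n) b x i)).
    apply: eq_bigr => x _; under eq_bigr do rewrite mulrBr.
    rewrite sumrB sum_const_ord big_distrr /=; congr (_ - _).
    by apply: eq_bigr => i _; ring.
  rewrite sumrB sumr_const -mulr_natr -big_distrr /= eb natrM; ring.
rewrite e.
have p0 : (0 < #|P|)%N by apply/card_gt0P; exists z0.
have pR : (#|P|%:R : R) != 0 by rewrite pnatr_eq0 -lt0n.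
have nR : (n%:R : R) != 0 by rewrite pnatr_eq0 -lt0n.
have dR : ((d'.+1)%:R : R) != 0 by rewrite pnatr_eq0.
have e1 : c * X * (#|P| * n)%:R = X.
  by rewrite natrM /c; field; rewrite ?nR ?pR ?dR.
have e2 : c * Y * (d'.+1)%:R = (n%:R + 1) / #|P|%:R.
  rewrite /c /Y /Kc natrM -addn1 natrD; field.
  have hd0 : 0 <= (d'%:R : R) by rewrite ler0n.
  rewrite pR nR andbT /= gt_eqF //; lra.
have e3 : 1 <= (n%:R + 1) / (#|P|%:R : R).
  rewrite ler_pdivlMr ?ltr0n // mul1r -(natrD _ n 1) ler_nat addn1 //.
have gP : gpot P = X by rewrite /gpot hd.
rewrite e1 e2 gP; lra.
Qed.


Definition Phi t : R := \sum_Q mu n phi t Q * gpot Q.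

Lemma tail_ge0 t : 0 <= tail_prob n phi t.
Proof. by apply: sumr_ge0 => Q _; exact: mu_ge0. Qed.

Lemma Phi_ge0 t : 0 <= Phi t.
Proof. by apply: sumr_ge0 => Q _; apply: mulr_ge0; [exact: mu_ge0|exact: g_ge0]. Qed.

Lemma Phi_step t : Phi t.+1 <= Phi t - tail_prob n phi t.
Proof.
rewrite /Phi /tail_prob /=.
under eq_bigr do rewrite ffunE.
apply: le_trans (_ : \sum_Q (\sum_P mu n phi t P * Defs.kernel phi P Q) * gpot Q <= _).
  apply: ler_sum => Q _; case: ifP => _ //; rewrite mul0r; apply: mulr_ge0.
    by apply: sumr_ge0 => P _; apply: mulr_ge0; [exact: mu_ge0|exact: kernel_ge0].
  exact: g_ge0.
rewrite (eq_bigr (fun Q => \sum_P mu n phi t P * Defs.kernel phi P Q * gpot Q)); last first.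
  by move=> Q _; rewrite big_distrl.
rewrite exchange_big /= -sumrB; apply: ler_sum => P _.
under eq_bigr do rewrite -mulrA.
rewrite -big_distrr /=.
case: (eqVneq (mu n phi t P) 0) => [->|nz]; first by rewrite !mul0r subr0.
have hd := drift _ (mu_supp _ _ nz).
rewrite -[X in _ <= _ - X]mulr1 -mulrBr; apply: ler_wpM2l => //; exact: mu_ge0.
Qed.

Lemma sum_tail T : \sum_(t < T) tail_prob n phi t + Phi T <= Phi 0.
Proof.
elim: T => [|T IH]; first by rewrite big_ord0 add0r.
rewrite big_ord_recr /=; have := Phi_step T; lra.
Qed.

Lemma tail0_le1 : tail_prob n phi 0 <= 1.
Proof.
rewrite /tail_prob /=.
under eq_bigr do rewrite ffunE.
apply: le_trans (_ : \sum_(Q : pop n) \sum_(x : bits n) ((2 ^ n)%:R)^-1 * (Q == [set x])%:R <= _).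
  apply: ler_sum => Q _; case: ifP => _ //.
  by apply: sumr_ge0 => x _; apply: mulr_ge0; rewrite ?ler0n // invr_ge0 ler0n.
rewrite exchange_big /=.
rewrite (eq_bigr (fun _ => ((2 ^ n)%:R)^-1 : R)); last first.
  move=> x _; rewrite -big_distrr /=.
  rewrite -[X in _ = X]mulr1; congr (_ * _).
  rewrite -[RHS](sum_pt [set x] (fun _ => 1)); apply: eq_bigr => Q _.
  by rewrite mulr1 eq_sym.
rewrite sumr_const card_ffun card_bool card_ord -(mulr_natr ((2 ^ n)%:R^-1)) mulVf //.
Qed.

Lemma Phi0_le : Phi 0 <= Kc * Hs n.
Proof.
apply: le_trans (_ : \sum_Q mu n phi 0 Q * (Kc * Hs n) <= _).
  apply: ler_sum => Q _; apply: ler_wpM2l; [exact: mu_ge0|exact: g_le].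
rewrite -big_distrl /=.
have := tail0_le1; rewrite /tail_prob => h.
have hk : 0 <= Kc * Hs n by apply: mulr_ge0; [exact: K_ge0|exact: H_ge0].
rewrite -[X in _ <= X]mul1r; apply: ler_wpM2r => //.
Qed.

Lemma ER_le : (expected_runtime n phi <= (Kc * Hs n)%:E)%E.
Proof.
rewrite /expected_runtime; apply: lime_le.
  by apply: is_cvg_nneseries => t _ _; rewrite lee_fin; exact: tail_ge0.
apply: nearW => T; rewrite sumEFin lee_fin big_mkord.
have := sum_tail T; have := Phi_ge0 T; have := Phi0_le; lra.
Qed.

End Prob.


Lemma H_ln (R : realType) (d : nat) : Hs R d.+1 <= 1 + ln ((d.+1)%:R : R).
Proof.
elim: d => [|d IH].
  by rewrite H_S /Hs big_ord0 ln1 add0r addr0 invr1.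
rewrite H_S.
have d1 : 0 < ((d.+1)%:R : R) by rewrite ltr0n.
have d2 : 0 < ((d.+2)%:R : R) by rewrite ltr0n.
have key : ln ((d.+1)%:R / (d.+2)%:R : R) <= - ((d.+2)%:R)^-1.
  have e : ((d.+2)%:R : R) = (d.+1)%:R + 1 by rewrite mulrSr.
  have -> : ((d.+1)%:R / (d.+2)%:R : R) = 1 + - ((d.+2)%:R)^-1.
    rewrite e; field.
    by rewrite gt_eqF //.
  apply: le_ln1Dx.
  have : ((d.+2)%:R^-1 : R) < 1 by rewrite invf_lt1 // ltr1n.
  by move=> h; rewrite ltrNl opprK.
move: key; rewrite lnM ?posrE ?invr_gt0 // lnV ?posrE //.
move: IH; set A := Hs R d.+1; set l1 := ln ((d.+1)%:R : R); set l2 := ln ((d.+2)%:R : R); set w := (((d.+2)%:R)^-1 : R). lra.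
Qed.

Lemma H4 (R : realType) : 2 <= Hs R 4.
Proof. rewrite /Hs !big_ord_recr big_ord0 /=; lra. Qed.

Theorem theorem2 (R : realType) :
  exists C : R, 0 < C /\ exists N : nat,
    forall (n : nat) (phi : R), ~~ odd n -> (N <= n)%N -> 0 < phi < 1 ->
      (expected_runtime n phi <=
        (C * ((phi^-1 + (1 - phi)^-1) * (n%:R ^+ 2 / 2) * ln n%:R))%:E)%E.
Proof.
exists 8; split; first lra.
exists 4%N => n phi _ hn /andP [p0 p1].
have n0 : (0 < n)%N by lia.
apply: le_trans (ER_le n R phi (ltW p0) (ltW p1) n0) _; rewrite lee_fin.
have hH : Hs R n <= 1 + ln (n%:R : R) by have := H_ln R n.-1; rewrite prednK.
have hL : 1 <= ln (n%:R : R).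
  have := H_mono R 4 n hn; have := H4 R; lra.
have ha : 1 <= phi^-1 + (1 - phi)^-1.
  have h1 : 1 <= phi^-1 by rewrite invf_ge1 // ltW.
  have h2 : 0 < (1 - phi)^-1 by rewrite invr_gt0 subr_gt0.
  lra.
have hN : (4%:R : R) <= n%:R by rewrite ler_nat.
have H0 := H_ge0 R n.
rewrite /Kc natrM -addn1 natrD.
set N := (n%:R : R) in hH hL hN *.
set L := ln N in hH hL *.
set a := phi^-1 + (1 - phi)^-1 in ha *.
set Hn := Hs R n in hH H0 *.
have N0 : 0 <= N * (N + 1%:R) by apply: mulr_ge0; lra.
have s1 : N * (N + 1%:R) * Hn <= N * (N + 1%:R) * (2 * L).
  by apply: ler_wpM2l => //; lra.
have Y0 : 0 <= N * L by apply: mulr_ge0; lra.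
have s2 : N * (N + 1%:R) * (2 * L) <= 4 * (N ^+ 2 * L).
  have : 0 <= (N * L) * (N - 1) by apply: mulr_ge0; lra.
  rewrite expr2; nra.
have Z0 : 0 <= N ^+ 2 * L by apply: mulr_ge0; [exact: sqr_ge0|lra].
have s3 : 4 * (N ^+ 2 * L) <= 8 * (a * (N ^+ 2 / 2) * L).
  have : 0 <= (N ^+ 2 * L) * (a - 1) by apply: mulr_ge0; lra.
  nra.
lra.
Qed.
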